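(* Let $k$ be a field of characteristic zero, $S=k[x,y]$, let $a,b$ be positive integers and $J=(x^a,y^b)\subset S$, and let $I$ be a monomial ideal of $S$ with $J\subset I$. Then the graded $S$-module $I/J$ has the strong Lefschetz property.
   Context: $S$ is standard graded. A finite graded $S$-module $M=\bigoplus_i M_i$ has the strong Lefschetz property if there exists a linear form $\ell\in S_1$ such that the multiplication map $\times\ell^d\colon M_i\to M_{i+d}$ has maximal rank (is injective or surjective) for all $d>0$ and all $i$. *)

(* Defs.v *)
From HB Require Import structures.
From mathcomp Require Import all_boot all_order all_algebra.
From mathcomp Require Import mpoly.
Set Implicit Arguments.
Unset Strict Implicit.
Unset Printing Implicit Defensive.
Import GRing.Theory.
Local Open Scope ring_scope.

Definition monomial_ideal_gen (k : fieldType) (n : nat)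
    (E : 'X_{1..n} -> Prop) (p : {mpoly k[n]}) : Prop :=
  exists s : seq ('X_{1..n} * {mpoly k[n]}),
    (forall x, x \in s -> E x.1) /\ p = \sum_(x <- s) x.2 * 'X_[x.1].

Definition is_monomial_ideal (k : fieldType) (n : nat)
    (I : {mpoly k[n]} -> Prop) : Prop :=
  exists E : 'X_{1..n} -> Prop, forall p, I p <-> monomial_ideal_gen E p.

Definition varx (k : fieldType) : {mpoly k[2]} := 'X_(ord0 : 'I_2).
Definition vary (k : fieldType) : {mpoly k[2]} := 'X_(ord_max : 'I_2).

Definition idealJ (k : fieldType) (a b : nat) (p : {mpoly k[2]}) : Prop :=
  exists u v : {mpoly k[2]}, p = u * varx k ^+ a + v * vary k ^+ b.

(* For homogeneous ideals J ⊆ I of S, the graded module M = I/J has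
   M_i = I_i / J_i (I_i = homogeneous elements of degree i in I).
   The map  x l^d : M_i -> M_{i+d},  [f] |-> [l^d f],  is
   - injective  iff  for f in I_i,  l^d f in J  implies  f in J;
   - surjective iff  every g in I_{i+d} is congruent mod J to l^d f
     for some f in I_i. *)
Definition mul_injective (k : fieldType) (n : nat)
    (I J : {mpoly k[n]} -> Prop) (l : {mpoly k[n]}) (d i : nat) : Prop :=
  forall f : {mpoly k[n]}, I f -> f \is i.-homog -> J (l ^+ d * f) -> J f.

Definition mul_surjective (k : fieldType) (n : nat)
    (I J : {mpoly k[n]} -> Prop) (l : {mpoly k[n]}) (d i : nat) : Prop :=
  forall g : {mpoly k[n]}, I g -> g \is (i + d)%N.-homog ->
    exists f : {mpoly k[n]},
      [/\ I f, f \is i.-homog & J (g - l ^+ d * f)].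

Definition quot_has_SLP (k : fieldType) (n : nat)
    (I J : {mpoly k[n]} -> Prop) : Prop :=
  exists l : {mpoly k[n]}, l \is 1.-homog /\
    forall d i : nat, (0 < d)%N ->
      mul_injective I J l d i \/ mul_surjective I J l d i.

(* Main.v *)
Require Import Defs.
From HB Require Import structures.
From mathcomp Require Import all_boot all_order all_algebra.
From mathcomp Require Import fingroup perm zify ring lra.
From mathcomp Require Import mpoly.
From Stdlib Require Import ClassicalEpsilon.
Set Implicit Arguments. Unset Strict Implicit. Unset Printing Implicit Defensive.
Import Order.TTheory GRing.Theory Num.Theory.
Local Open Scope ring_scope.

Definition ent (d r c : nat) : nat := if (r <= c)%N then 'C(d, c - r) else 0%N.

Lemma entS d r c : ent d.+1 r c = (ent d r c + (if (0 < c)%N then ent d r c.-1 else 0))%N.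
Proof.
rewrite /ent; case: (leqP r c) => hrc.
  case: c hrc => [|c] hrc /=.
    by rewrite (_ : r = 0%N) ?subnn ?bin0 ?addn0 //; lia.
  case: (leqP r c) => h2.
    by rewrite subSn // binS addnC.
  by rewrite (_ : r = c.+1) ?subnn ?bin0 ?addn0 //; lia.
case: c hrc => [|c] hrc //=.
by rewrite leqNgt (_ : (c < r)%N = true) //; lia.
Qed.

Lemma ent0 r c : ent 0 r c = (r == c).
Proof.
rewrite /ent; case: (leqP r c) => h.
  by rewrite bin0n subn_eq0 eqn_leq h.
by case: eqP => // E; rewrite E ltnn in h.
Qed.

Definition incr m (R : 'I_m -> nat) := forall i j : 'I_m, (i < j)%N -> (R i < R j)%N.
Definition Mt m d (R C : 'I_m -> nat) : 'M[int]_m := \matrix_(j, i) (ent d (R i) (C j))%:Z.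

Lemma det_addE (T : comPzRingType) m (A B : 'M[T]_m) :
  \det (A + B) = \sum_(phi : {ffun 'I_m -> bool}) \det (\matrix_(j, i) if phi j then B j i else A j i).
Proof.
rewrite /determinant.
transitivity (\sum_(s : 'S_m) \sum_(phi : {ffun 'I_m -> bool})
   (-1) ^+ s * \prod_j (if phi j then B j (s j) else A j (s j))).
  apply: eq_bigr => s _; rewrite -mulr_sumr; congr (_ * _).
  rewrite (eq_bigr (fun j => \sum_(x : bool) (if x then B j (s j) else A j (s j)))); last first.
    by move=> j _; rewrite big_bool mxE addrC.
  by rewrite bigA_distr_bigA.
rewrite exchange_big; apply: eq_bigr => phi _; apply: eq_bigr => s _; congr (_ * _).
by apply: eq_bigr => j _; rewrite mxE.
Qed.

Lemma incr_perm_id m (s : 'S_m) : (forall i j : 'I_m, (i < j)%N -> (s i < s j)%N) -> s = 1%g.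
Proof.
move=> hs.
have h1 : forall k (j : 'I_m), nat_of_ord j = k -> (k <= s j)%N.
  elim=> [//|k IH] j hj.
  have hk : (k < m)%N by rewrite -hj ltnW // ltn_ord.
  have := hs (Ordinal hk) j; rewrite hj /= => /(_ (ltnSn k)).
  have := IH (Ordinal hk) erefl; lia.
have h2 : forall k (j : 'I_m), (m - 1 - nat_of_ord j)%N = k -> (s j <= j)%N.
  elim=> [|k IH] j hj.
    have := ltn_ord (s j); lia.
  have hk : (j.+1 < m)%N by lia.
  have := hs j (Ordinal hk); rewrite /= => /(_ (ltnSn j)).
  have := IH (Ordinal hk); rewrite /=; lia.
apply/permP => j; apply: val_inj; rewrite /= perm1.
have := h1 _ j erefl; have := h2 _ j erefl; lia.
Qed.

Lemma det_row0 (T : comPzRingType) m (A : 'M[T]_m) (j : 'I_m) : (forall i, A j i = 0) -> \det A = 0.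
Proof.
move=> h; rewrite (expand_det_row A j) big1 // => i _; by rewrite h mul0r.
Qed.

Definition Bm m d (R C : 'I_m -> nat) : 'M[int]_m :=
  \matrix_(j, i) ((if (0 < C j)%N then ent d (R i) (C j).-1 else 0%N)%:Z).

Lemma MtS m d (R C : 'I_m -> nat) : Mt d.+1 R C = Mt d R C + Bm d R C.
Proof. by apply/matrixP => j i; rewrite !mxE entS PoszD. Qed.

Lemma incr_lt m (R : 'I_m -> nat) i j : incr R -> (R i < R j)%N -> (i < j)%N.
Proof.
move=> hR h; case: (ltngtP i j) => // h2.
  by have := hR _ _ h2; lia.
have E : i = j by apply: val_inj.
by rewrite E ltnn in h.
Qed.

Lemma TN_base m (R C : 'I_m -> nat) : incr R -> incr C -> 0 <= \det (Mt 0 R C).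
Proof.
move=> hR hC; rewrite /determinant; apply: sumr_ge0 => s _.
case: (boolP [forall j, R (s j) == C j]) => [/forallP h | /forallPn [j hj]].
  have -> : s = 1%g.
    apply: incr_perm_id => i j lt; apply: (incr_lt hR).
    by rewrite (eqP (h i)) (eqP (h j)); apply: hC.
  rewrite odd_perm1 expr0 mul1r; apply: prodr_ge0 => j _; by rewrite mxE.
by rewrite (bigD1 j) //= mxE ent0 (negbTE hj) mul0r mulr0.
Qed.

Lemma TP m d (R C : 'I_m -> nat) : incr R -> incr C ->
  0 <= \det (Mt d R C) /\ ((forall j, (R j <= C j <= R j + d)%N) -> 0 < \det (Mt d R C)).
Proof.
elim: d R C => [|d IH] R C hR hC.
  split; first exact: TN_base.
  move=> hb; have -> : Mt 0 R C = 1%:M.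
    apply/matrixP => j i; rewrite !mxE ent0.
    have -> : C j = R j by have := hb j; lia.
    case: (eqVneq i j) => [->|ne]; first by rewrite eqxx.
    case: (eqVneq (R i) (R j)) => E //.
    case: (ltngtP i j) => h.
    - by have := hR _ _ h; rewrite E ltnn.
    - by have := hR _ _ h; rewrite E ltnn.
    - by move: ne; rewrite (val_inj h) eqxx.
  by rewrite det1.
have hterm : forall phi : {ffun 'I_m -> bool},
    0 <= \det (\matrix_(j, i) if phi j then Bm d R C j i else Mt d R C j i).
  move=> phi.
  case: (boolP [exists j, phi j && (C j == 0%N)]) => [/existsP [j /andP [pj /eqP cj]] | hno].
    by rewrite (det_row0 (j:=j)) // => i; rewrite !mxE pj cj.
  pose C' := fun j => if phi j then (C j).-1 else C j.
  have -> : (\matrix_(j, i) if phi j then Bm d R C j i else Mt d R C j i) = Mt d R C'.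
    apply/matrixP => j i; rewrite !mxE /C'; case: (boolP (phi j)) => pj //=.
    have : C j != 0%N by apply: contra hno => /eqP cj; apply/existsP; exists j; rewrite pj cj.
    by case: (C j).
  case: (boolP [forall i : 'I_m, forall j : 'I_m, (i < j)%N ==> (C' i < C' j)%N]) =>
      [/forallP hi | /forallPn [i /forallPn [j]]].
    apply: (IH R C' hR _).1 => i j lt.
    by have := hi i => /forallP /(_ j) /implyP; apply.
  rewrite negb_imply => /andP [lt hge].
  have E : C' i = C' j.
    rewrite /C' in hge *; have := hC _ _ lt; move: hge.
    case: (phi i); case: (phi j); lia.
  rewrite (determinant_alternate (i1:=i) (i2:=j)) //.
    by rewrite neq_ltn lt.
  by move=> k; rewrite !mxE E.
split.
  by rewrite MtS det_addE; apply: sumr_ge0 => phi _; exact: hterm.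
move=> hb; rewrite MtS det_addE.
pose phi0 := [ffun j : 'I_m => (R j < C j)%N].
rewrite (bigD1 phi0) //=.
have hpos : 0 < \det (\matrix_(j, i) if phi0 j then Bm d R C j i else Mt d R C j i).
  pose C' := fun j => if (R j < C j)%N then (C j).-1 else C j.
  have -> : (\matrix_(j, i) if phi0 j then Bm d R C j i else Mt d R C j i) = Mt d R C'.
    apply/matrixP => j i; rewrite !mxE /C' ffunE; case: ifP => // h.
    by rewrite (_ : (0 < C j)%N = true) //; lia.
  apply: (IH R C' hR _).2.
    move=> i j lt; rewrite /C'; have := hR _ _ lt; have := hC _ _ lt.
    have := hb i; have := hb j; case: ifP; case: ifP; lia.
  by move=> j; rewrite /C'; have := hb j; case: ifP; lia.
have : 0 <= \sum_(phi | phi != phi0) \det (\matrix_(j, i) if phi j then Bm d R C j i else Mt d R C j i).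
  by apply: sumr_ge0 => phi _; exact: hterm.
by move=> h; apply: (lt_le_trans hpos); rewrite lerDl.
Qed.

Definition Mk (K : fieldType) m d (R C : 'I_m -> nat) : 'M[K]_m :=
  \matrix_(j, i) (ent d (R i) (C j))%:R.

Lemma Mk_unit (K : fieldType) (char0 : [pchar K] =i pred0) m d (R C : 'I_m -> nat) :
  incr R -> incr C -> (forall j, (R j <= C j <= R j + d)%N) -> Mk K d R C \in unitmx.
Proof.
move=> hR hC hb.
have hz := (TP d hR hC).2 hb.
have -> : Mk K d R C = map_mx intr (Mt d R C).
  by apply/matrixP => j i; rewrite !mxE.
rewrite unitmxE det_map_mx unitfE.
move: hz; case: (\det (Mt d R C)) => [n|n] // hn.
rewrite /= (pcharf0P _).1 //.
by case: n hn.
Qed.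


Section P.
Variable k : fieldType.

Definition mn (c r : nat) : 'X_{1..2} := [multinom (if i == ord0 then c else r) | i < 2].

Lemma ord2P (i : 'I_2) : i = ord0 \/ i = ord_max.
Proof. by case: i => [[|[|//]]] hi; [left|right]; apply: val_inj. Qed.

Lemma mn0 c r : mn c r ord0 = c. Proof. by rewrite mnmE. Qed.
Lemma mn1 c r : mn c r ord_max = r. Proof. by rewrite mnmE. Qed.

Lemma mnE (m : 'X_{1..2}) : m = mn (m ord0) (m ord_max).
Proof. by apply/mnmP => i; case: (ord2P i) => ->; rewrite ?mn0 ?mn1. Qed.

Lemma mn_inj c r c' r' : mn c r = mn c' r' -> c = c' /\ r = r'.
Proof. by move=> E; split; [rewrite -(mn0 c r) E mn0 | rewrite -(mn1 c r) E mn1]. Qed.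

Lemma mdeg_mn c r : mdeg (mn c r) = (c + r)%N.
Proof. by rewrite mdegE big_ord_recr big_ord1 /= !mnmE. Qed.

Lemma mcoeffMXg (p : {mpoly k[2]}) u m :
  (p * 'X_[u])@_m = if (u <= m)%MM then p@_(m - u) else 0.
Proof.
case: ifP => h.
  have E : m = (u + (m - u))%MM by rewrite addmC submK.
  by rewrite {1}E mcoeffMX.
apply: memN_msupp_eq0; rewrite (perm_mem (msuppMX p u)).
by apply/mapP => -[m' _ E]; move: h; rewrite E lem_addr.
Qed.

Lemma U0_le c r : (U_(ord0) <= mn c r)%MM = (0 < c)%N.
Proof. by rewrite lep1mP mn0 lt0n. Qed.
Lemma U1_le c r : (U_(ord_max) <= mn c r)%MM = (0 < r)%N.
Proof. by rewrite lep1mP mn1 lt0n. Qed.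
Lemma mn_subU0 c r : (mn c r - U_(ord0))%MM = mn c.-1 r.
Proof.
apply/mnmP => i; rewrite mnmBE mnm1E; case: (ord2P i) => ->; rewrite ?mn0 ?mn1 //=.
  by rewrite subn1.
by rewrite subn0.
Qed.
Lemma mn_subU1 c r : (mn c r - U_(ord_max))%MM = mn c r.-1.
Proof.
apply/mnmP => i; rewrite mnmBE mnm1E; case: (ord2P i) => ->; rewrite ?mn0 ?mn1 //=.
  by rewrite subn0.
by rewrite subn1.
Qed.


Lemma sum_delta N c (F : nat -> k) : (c < N)%N ->
  \sum_(p < N) ((p == c :> nat) : nat)%:R * F p = F c.
Proof.
move=> hc; rewrite (bigD1 (Ordinal hc)) //= eqxx mul1r big1 ?addr0 // => i ne.
rewrite (_ : (i == c :> nat) = false) ?mul0r //; apply/negbTE.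
by apply: contra ne => /eqP E; apply/eqP/val_inj.
Qed.

Lemma CF d n (f : {mpoly k[2]}) c : f \is n.-homog -> (c <= n + d)%N ->
  ((varx k + vary k) ^+ d * f)@_(mn c (n + d - c)) =
  \sum_(p < n.+1) (ent d p c)%:R * f@_(mn p (n - p)).
Proof.
move=> hf; elim: d c => [|d IH] c hc.
  rewrite expr0 mul1r addn0 (eq_bigr (fun p : 'I_n.+1 => ((p == c :> nat) : nat)%:R * f@_(mn p (n - p)))).
    by rewrite (sum_delta (fun p => f@_(mn p (n - p)))) //; move: hc; rewrite addn0.
  by move=> p _; rewrite ent0.
rewrite exprS -mulrA mulrDl mcoeffD.
set g := (varx k + vary k) ^+ d * f.
rewrite ![_ * g]mulrC !mcoeffMXg U0_le U1_le mn_subU0 mn_subU1.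
rewrite (eq_bigr (fun p : 'I_n.+1 => (ent d p c)%:R * f@_(mn p (n - p)) +
   (if (0 < c)%N then ent d p c.-1 else 0%N)%:R * f@_(mn p (n - p)))); last first.
  by move=> p _; rewrite entS natrD mulrDl.
rewrite big_split /= addrC; congr (_ + _).
  case: ifP => hc0.
    have -> : (n + d.+1 - c = n + d - c.-1)%N by lia.
    by rewrite IH //; lia.
  by rewrite big1 // => p _; rewrite mul0r.
case: ifP => hr.
  have -> : ((n + d.+1 - c).-1 = n + d - c)%N by lia.
  by rewrite IH //; lia.
rewrite big1 // => p _; rewrite /ent; case: ifP => _; last by rewrite mul0r.
rewrite bin_small; first by rewrite mul0r.
have := ltn_ord p; lia.
Qed.

Lemma lemU_mul (i : 'I_2) a (m : 'X_{1..2}) : (U_(i) *+ a <= m)%MM -> (a <= m i)%N.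
Proof. by move/mnm_lepP => /(_ i); rewrite mulmnE mnm1E eqxx mul1n. Qed.

Lemma U_mul_le (i : 'I_2) a (m : 'X_{1..2}) : (a <= m i)%N -> (U_(i) *+ a <= m)%MM.
Proof.
move=> h; apply/mnm_lepP => j; rewrite mulmnE mnm1E.
by case: (eqVneq i j) => [<-|_]; rewrite ?mul1n ?mul0n.
Qed.

Lemma J_coef a b (p : {mpoly k[2]}) : idealJ a b p ->
  forall m : 'X_{1..2}, (m ord0 < a)%N -> (m ord_max < b)%N -> p@_m = 0.
Proof.
case=> u [v ->] m ha hb.
rewrite mcoeffD /varx /vary !mpolyXn !mcoeffMXg.
case: ifP => [/lemU_mul|_]; first by lia.
case: ifP => [/lemU_mul|_]; first by lia.
by rewrite addr0.
Qed.

Lemma coef_J a b (p : {mpoly k[2]}) :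
  (forall m : 'X_{1..2}, (m ord0 < a)%N -> (m ord_max < b)%N -> p@_m = 0) -> idealJ a b p.
Proof.
move=> h.
exists (\sum_(m <- msupp p | (a <= m ord0)%N) p@_m *: 'X_[m - U_(ord0) *+ a]).
exists (\sum_(m <- msupp p | ~~ (a <= m ord0)%N) p@_m *: 'X_[m - U_(ord_max) *+ b]).
rewrite {1}[p]mpolyE (bigID (fun m : 'X_{1..2} => (a <= m ord0)%N)) /=.
rewrite /varx /vary !mpolyXn !mulr_suml.
congr (_ + _); rewrite big_seq_cond [RHS]big_seq_cond; apply: eq_bigr => m /andP [hm ha];
  rewrite -scalerAl -mpolyXD submK //.
  exact: U_mul_le.
apply: U_mul_le.
move: hm; rewrite mcoeff_msupp; apply: contraR; rewrite -ltnNge => hb.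
by apply/eqP; apply: h => //; rewrite ltnNge.
Qed.

Section Gen.
Variable E : 'X_{1..2} -> Prop.

Lemma gen0 : monomial_ideal_gen E (0 : {mpoly k[2]}).
Proof. by exists [::]; split => //; rewrite big_nil. Qed.

Lemma genD (p q : {mpoly k[2]}) : monomial_ideal_gen E p -> monomial_ideal_gen E q ->
  monomial_ideal_gen E (p + q).
Proof.
case=> s1 [h1 ->] [s2 [h2 ->]]; exists (s1 ++ s2); split; last by rewrite big_cat.
by move=> x; rewrite mem_cat => /orP [/h1|/h2].
Qed.

Lemma genM (r p : {mpoly k[2]}) : monomial_ideal_gen E p -> monomial_ideal_gen E (r * p).
Proof.
case=> s [h ->]; exists [seq (x.1, r * x.2) | x <- s]; split.
  by move=> x /mapP [y hy ->] /=; apply: h.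
by rewrite big_map mulr_sumr; apply: eq_bigr => x _ /=; rewrite mulrA.
Qed.

Lemma genX e : E e -> monomial_ideal_gen E ('X_[e] : {mpoly k[2]}).
Proof.
by move=> he; exists [:: (e, 1)]; split; [move=> x; rewrite inE => /eqP -> | rewrite big_seq1 mul1r].
Qed.

Lemma gen_mon (p : {mpoly k[2]}) m : monomial_ideal_gen E p -> m \in msupp p ->
  monomial_ideal_gen E ('X_[m] : {mpoly k[2]}).
Proof.
case=> s [hs ->]; rewrite mcoeff_msupp raddf_sum => hm.
case: (boolP (has (fun x => (x.2 * 'X_[x.1])@_m != 0) s)) => [/hasP [x hx hnz] | /hasPn hn].
  move: hnz; rewrite mcoeffMXg; case: ifP => [hle _|]; last by rewrite eqxx.
  exists [:: (x.1, 'X_[m - x.1])]; split.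
    by move=> y; rewrite inE => /eqP -> /=; apply: hs.
  by rewrite big_seq1 /= -mpolyXD submK.
move: hm; rewrite big1_seq ?eqxx // => x /andP [_ hx].
by apply/eqP; have := hn x hx; rewrite negbK.
Qed.

Lemma mon_gen (p : {mpoly k[2]}) :
  (forall m, m \in msupp p -> monomial_ideal_gen E ('X_[m] : {mpoly k[2]})) ->
  monomial_ideal_gen E p.
Proof.
move=> h; rewrite [p]mpolyE big_seq; apply: big_ind.
- exact: gen0.
- exact: genD.
- by move=> m hm; rewrite -mul_mpolyC; apply: genM; apply: h.
Qed.

End Gen.

End P.

From Stdlib Require Import ClassicalEpsilon.
Definition pb (P : Prop) : bool := if excluded_middle_informative P then true else false.
Lemma pbP (P : Prop) : reflect P (pb P).
Proof. by rewrite /pb; case: excluded_middle_informative => h; constructor. Qed.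



Lemma nth_gap (s : seq nat) i j : sorted ltn s -> (i <= j)%N -> (j < size s)%N ->
  (nth 0 s i + (j - i) <= nth 0 s j)%N.
Proof.
move=> hs; elim: j => [|j IH] hij hj.
  by rewrite (_ : i = 0%N) ?subn0 ?addn0 //; lia.
case: (eqVneq i j.+1) => [->|ne]; first by rewrite subnn addn0.
have h1 := IH (ltac:(lia)) (ltac:(lia)).
have h2 : (nth 0 s j < nth 0 s j.+1)%N.
  by apply: (sorted_ltn_nth ltn_trans) => //; rewrite inE; lia.
lia.
Qed.

Section Main.
Variables (k : fieldType) (char0 : [pchar k] =i pred0) (a b : nat) (hb : (0 < b)%N).
Variables (I : {mpoly k[2]} -> Prop) (E : 'X_{1..2} -> Prop).
Hypothesis hE : forall p, I p <-> monomial_ideal_gen E p.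
Variables (d n : nat).

Definition lam := ((n + d).+1 - b)%N.
Definition K := (minn a (n + d).+1 - lam)%N.
Definition sel p := [&& (p < a)%N, (n - p < b)%N & pb (I 'X_[mn p (n - p)])].
Definition Ps := [seq p <- iota 0 n.+1 | sel p].

Lemma Ps_sorted : sorted ltn Ps.
Proof. by apply: sorted_filter; [exact: ltn_trans | exact: iota_ltn_sorted]. Qed.

Lemma memPs p : (p \in Ps) = (p < n.+1)%N && sel p.
Proof. by rewrite mem_filter mem_iota /= add0n andbC. Qed.

Lemma nthPs i : (i < size Ps)%N ->
  [/\ (nth 0 Ps i <= n)%N, (nth 0 Ps i < a)%N, (n - nth 0 Ps i < b)%N & I 'X_[mn (nth 0 Ps i) (n - nth 0 Ps i)]].
Proof.
move=> hi; have := mem_nth 0%N hi; rewrite memPs => /andP [h1 /and3P [h2 h3 /pbP h4]].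
by split.
Qed.

Lemma Ps_low i : (i < size Ps)%N -> ((n.+1 - b) + i <= nth 0 Ps i)%N.
Proof.
move=> hi; have := nth_gap Ps_sorted (leq0n i) hi.
have [_ _ h _] := nthPs (ltac:(lia) : (0 < size Ps)%N); lia.
Qed.

Lemma Ps_high i : (i < size Ps)%N -> (nth 0 Ps i + (size Ps - i) <= minn a n.+1)%N.
Proof.
move=> hi; have hl : ((size Ps).-1 < size Ps)%N by lia.
have := nth_gap Ps_sorted (ltac:(lia) : (i <= (size Ps).-1)%N) hl.
have [h1 h2 _ _] := nthPs hl; lia.
Qed.

Lemma sum_Ps (F : nat -> k) : (forall p, (p < n.+1)%N -> ~~ sel p -> F p = 0) ->
  \sum_(p < n.+1) F p = \sum_(i < size Ps) F (nth 0 Ps i).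
Proof.
move=> h.
rewrite -(big_mkord xpredT) -(big_mkord xpredT (fun i => F (nth 0 Ps i))).
rewrite -(big_nth 0%N xpredT F) /Ps big_filter.
rewrite [LHS](bigID sel) /= [X in _ + X]big1_seq ?addr0 //.
by move=> p /andP [hs hp]; apply: h => //; move: hp; rewrite mem_index_iota.
Qed.

Lemma I_coef f p : I f -> f@_(mn p (n - p)) != 0 -> pb (I 'X_[mn p (n - p)]).
Proof.
move=> /hE hf hnz; apply/pbP; apply/hE; apply: (gen_mon hf).
by rewrite mcoeff_msupp.
Qed.

Lemma coef_nonsel f p : I f -> (p < n.+1)%N -> ~~ sel p -> (p < a)%N -> (n - p < b)%N ->
  f@_(mn p (n - p)) = 0.
Proof.
move=> hf hp hs ha hb'; apply/eqP; apply: contraNT hs => hnz.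
by rewrite /sel ha hb' (I_coef hf hnz).
Qed.

Lemma inj_case : (size Ps <= K)%N -> mul_injective I (idealJ a b) (varx k + vary k) d n.
Proof.
move=> hmK f hIf hf hJ.
pose R (i : 'I_(size Ps)) := nth 0%N Ps i.
pose C (i : 'I_(size Ps)) := maxn (R i) (lam + i).
have incR : incr R.
  by move=> i j lt; apply: (sorted_ltn_nth ltn_trans 0%N Ps_sorted) => //; exact: ltn_ord.
have incC : incr C.
  move=> i j lt; have := incR _ _ lt; rewrite /C; lia.
have hbnd : forall j, (R j <= C j <= R j + d)%N.
  move=> j; have := Ps_low (ltn_ord j); rewrite /C /R /lam; lia.
have hunit := Mk_unit char0 incR incC hbnd.
have hbox : forall j, [/\ (C j < a)%N, (n + d - C j < b)%N & (C j <= n + d)%N].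
  move=> j; have := Ps_high (ltn_ord j); have := ltn_ord j; rewrite /C /R /K /lam in hmK *.
  have [h1 h2 h3 _] := nthPs (ltn_ord j); move=> *; split; lia.
pose v : 'cV[k]_(size Ps) := \col_i f@_(mn (R i) (n - R i)).
have hv : Mk k d R C *m v = 0.
  apply/matrixP => j z; rewrite !mxE.
  have [h1 h2 h3] := hbox j.
  transitivity (\sum_(p < n.+1) (ent d p (C j))%:R * f@_(mn p (n - p))); last first.
    rewrite -CF //; apply: (J_coef hJ); rewrite ?mn0 ?mn1 //.
  rewrite (sum_Ps (F := fun p => (ent d p (C j))%:R * f@_(mn p (n - p)))).
    by apply: eq_bigr => i _; rewrite !mxE.
  move=> p hp hs; rewrite /ent; case: ifP => hpc; last by rewrite mul0r.
  case: (leqP (C j - p) d) => hcd; last by rewrite bin_small // mul0r.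
  by rewrite (coef_nonsel hIf hp hs) ?mulr0 //; lia.
have v0 : v = 0 by rewrite -(mulKmx hunit v) hv mulmx0.
apply: coef_J => mm ha' hb'.
case: (eqVneq (mdeg mm) n) => hdeg; last by rewrite (dhomog_nemf_coeff hf hdeg).
have E1 : mm ord_max = (n - mm ord0)%N by move: hdeg; rewrite {1}(mnE mm) mdeg_mn; lia.
rewrite (mnE mm) E1.
set p := mm ord0.
have hp : (p < n.+1)%N by move: hdeg; rewrite {1}(mnE mm) mdeg_mn; lia.
case: (boolP (sel p)) => hs; last by apply: (coef_nonsel hIf) => //; rewrite -E1.
have hin : p \in Ps by rewrite memPs hp hs.
have hidx : (index p Ps < size Ps)%N by rewrite index_mem.
have := congr1 (fun M : 'cV[k]_(size Ps) => M (Ordinal hidx) ord0) v0; rewrite !mxE /R /= nth_index //.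
Qed.

Lemma l_homog : varx k + vary k \is 1.-homog.
Proof. by apply: rpredD; rewrite /varx /vary dhomogX; apply/eqP; apply: mdeg1. Qed.

Lemma surj_case : (K <= size Ps)%N -> mul_surjective I (idealJ a b) (varx k + vary k) d n.
Proof.
move=> hKm g hIg hg.
pose tau (j : 'I_K) := nth 0%N Ps (size Ps - K + j).
pose C (j : 'I_K) := (lam + j)%N.
have hidx : forall j : 'I_K, (size Ps - K + j < size Ps)%N by move=> j; have := ltn_ord j; lia.
have incT : incr tau.
  move=> i j lt; apply: (sorted_ltn_nth ltn_trans 0%N Ps_sorted); rewrite ?inE /=; try exact: hidx.
  lia.
have incC : incr C by move=> i j lt; rewrite /C; lia.
have hbnd : forall j, (tau j <= C j <= tau j + d)%N.
  move=> j; have := Ps_low (hidx j); have := Ps_high (hidx j); have := ltn_ord j.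
  move: hKm; rewrite /tau /C /K /lam; lia.
have hunit := Mk_unit char0 incT incC hbnd.
have htau : forall j, (tau j <= n)%N /\ I 'X_[mn (tau j) (n - tau j)].
  by move=> j; have [h1 _ _ h4] := nthPs (hidx j).
pose w : 'cV[k]_K := \col_j g@_(mn (C j) (n + d - C j)).
pose v := invmx (Mk k d tau C) *m w.
pose f := \sum_(j < K) v j ord0 *: ('X_[mn (tau j) (n - tau j)] : {mpoly k[2]}).
have hf : f \is n.-homog.
  apply: rpred_sum => j _; apply: rpredZ; rewrite dhomogX; apply/eqP.
  by apply: etrans (mdeg_mn _ _) _; have [h _] := htau j; lia.
exists f; split => //.
  apply/hE; apply: big_ind; [exact: gen0 | exact: genD | ].
  move=> j _; rewrite -mul_mpolyC; apply: genM; apply/hE; exact: (htau j).2.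
have hfc : forall p, (p <= n)%N -> f@_(mn p (n - p)) = \sum_(j < K) ((p == tau j : nat)%:R * v j ord0).
  move=> p hp; rewrite raddf_sum; apply: eq_bigr => j _ /=.
  rewrite mcoeffZ mcoeffX mulrC; congr (_ * _).
  have [ht _] := htau j.
  case: (eqVneq p (tau j)) => [->|ne]; first by rewrite eqxx.
  case: eqP => // /mn_inj [E2 _]; move: ne; rewrite E2 eqxx.
  done.
have hlf : (varx k + vary k) ^+ d * f \is (n + d).-homog.
  by rewrite addnC; apply: dhomogM => //; have := dhomogMn d l_homog; rewrite mul1n.
apply: coef_J => mm ha' hb'.
have hgl : g - (varx k + vary k) ^+ d * f \is (n + d).-homog by apply: rpredB.
case: (eqVneq (mdeg mm) (n + d)%N) => hdeg; last by rewrite (dhomog_nemf_coeff hgl hdeg).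
set c := mm ord0.
have E1 : mm ord_max = (n + d - c)%N by move: hdeg; rewrite {1}(mnE mm) mdeg_mn /c; lia.
have hc : (c <= n + d)%N by move: hdeg; rewrite {1}(mnE mm) mdeg_mn /c; lia.
have hj : (c - lam < K)%N by rewrite /K /lam; lia.
pose j := Ordinal hj.
have hCj : C j = c by rewrite /C /= /lam; lia.
rewrite (mnE mm) E1 -/c mcoeffB CF //.
rewrite (eq_bigr (fun p : 'I_n.+1 => \sum_(j0 < K) (ent d (tau j0) c)%:R * v j0 ord0 * (((p : nat) == tau j0 : nat)%:R))); last first.
  move=> p _; rewrite hfc; last by rewrite -ltnS ltn_ord.
  rewrite mulr_sumr; apply: eq_bigr => j0 _.
  case: (eqVneq (p : nat) (tau j0)) => [<-|_] /=.
    by rewrite mulr1n mul1r mulr1.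
  by rewrite mulr0n mul0r !mulr0.
rewrite exchange_big /=.
rewrite (eq_bigr (fun j0 : 'I_K => (ent d (tau j0) c)%:R * v j0 ord0)); last first.
  move=> j0 _; rewrite -mulr_sumr.
  rewrite (eq_bigr (fun p : 'I_n.+1 => ((p == tau j0 :> nat) : nat)%:R * 1)); last by move=> p _; rewrite mulr1.
  rewrite (sum_delta (fun _ => 1)) ?mulr1 //.
  by have [h _] := htau j0; rewrite ltnS.
have : (Mk k d tau C *m v) j ord0 = w j ord0 by rewrite mulKVmx.
rewrite !mxE hCj => <-.
apply/eqP; rewrite subr_eq0; apply/eqP; apply: eq_bigr => j0 _.
by rewrite /Mk mxE hCj.
Qed.

End Main.

Unset Implicit Arguments.

Theorem theorem3p1 (k : fieldType) (char0 : [pchar k] =i pred0)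
    (a b : nat) (ha : (0 < a)%N) (hb : (0 < b)%N)
    (I : {mpoly k[2]} -> Prop)
    (hI : is_monomial_ideal I)
    (hJI : forall p, idealJ a b p -> I p) :
  quot_has_SLP I (idealJ a b).
Proof.
case: hI => E hE.
exists (varx k + vary k); split; first exact: l_homog.
move=> d i hd.
case: (leqP (size (Ps a b I i)) (K a b d i)) => h.
  by left; apply: (inj_case char0 hb hE).
by right; apply: (surj_case char0 hb hE); apply: ltnW.
Qed.
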